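(* Let $k>0$ and let $T$ be large. For every $1\le j\le \mathcal{J}$ and every complex number $s$, writing $K_j=\lceil e^2k\alpha_j^{-3/4}\rceil$ and $\delta_j = e^{-e^2k\alpha_j^{-3/4}}$: (i) if $0<k\le 1/2$, then $$|\mathcal{N}_j(s,k)|^{2/k}|\mathcal{N}_j(s,k-1)|^{2} \le |\mathcal{N}_j(s,k)|^2(1+\delta_j)^{2/k+2}(1-\delta_j)^{-2} + |\mathcal{Q}_j(s,k)|^{2r_k};$$ (ii) if $k>1/2$, then $$|\mathcal{N}_j(s,k-1)\mathcal{N}_j(s,k)|^{\frac{2k}{2k-1}} \le |\mathcal{N}_j(s,k)|^2(1+\delta_j)^{\frac{2k}{2k-1}}(1-\delta_j)^{-2} + |\mathcal{Q}_j(s,k)|^{2r_k}.$$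
   Context: Fix real $k>0$, a large number $M$ depending only on $k$, and a large number $T$. Set $\alpha_0=0$, $\alpha_j = 20^{j-1}/(\log\log T)^2$ for $j\ge1$, and $\mathcal{J}=1+\max\{j:\alpha_j\le 10^{-M}\}$. Let $I_j=(T^{\alpha_{j-1}},T^{\alpha_j}]$ for $1\le j\le\mathcal{J}$. For real $\ell$ and $x$ (or complex $x$) put $E_\ell(x)=\sum_{i=0}^{\lceil \ell\rceil} x^i/i!$. For $1\le j\le \mathcal{J}$, real $\alpha$ and complex $s$ define $\mathcal{P}_j(s)=\sum_{p\in I_j}p^{-s}$ ($p$ prime), $\mathcal{N}_j(s,\alpha)=E_{e^2k\alpha_j^{-3/4}}(\alpha\mathcal{P}_j(s))$, and $$\mathcal{Q}_j(s,k)=\Big(\frac{64\max(2,k+3/2)\,\mathcal{P}_j(s)}{\lceil e^2k\alpha_j^{-3/4}\rceil}\Big)^{\lceil e^2k\alpha_j^{-3/4}\rceil}.$$ Set $r_k=2+\lceil 1/k\rceil$ if $0<k\le1/2$ and $r_k=1+\lceil 2k/(2k-1)\rceil$ if $k>1/2$. *)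

(* Defs.v *)
From Stdlib Require Import Reals ZArith Znumtheory.
From Coquelicot Require Import Coquelicot.
Open Scope R_scope.

Definition ceilZ (x : R) : Z := (- Int_part (- x))%Z.
Definition ceilN (x : R) : nat := Z.to_nat (ceilZ x).

(* x^y for x >= 0 and y > 0, with 0^y = 0 (Stdlib's Rpower 0 y = 1) *)
Definition rpow (x y : R) : R := if Req_EM_T x 0 then 0 else Rpower x y.

(* n^{-s} for a positive integer n and complex s = sigma + i t *)
Definition npow_neg (n : nat) (s : C) : C :=
  let L := ln (INR n) in
  (exp (- (Re s) * L) * cos (Im s * L), - (exp (- (Re s) * L) * sin (Im s * L))).

Definition is_primeb (n : nat) : bool :=
  if prime_dec (Z.of_nat n) then true else false.

Definition prime_sum (a b : R) (s : C) : C :=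
  sum_n_m (fun n : nat =>
    if is_primeb n then
      if Rlt_dec a (INR n) then
        if Rle_dec (INR n) b then npow_neg n s else RtoC 0
      else RtoC 0
    else RtoC 0) 0 (Z.to_nat (up b)).

(* alpha_0 = 0, alpha_j = 20^{j-1}/(log log T)^2 *)
Definition alpha (T : R) (j : nat) : R :=
  match j with
  | O => 0
  | S i => 20 ^ i / (ln (ln T)) ^ 2
  end.

(* m is the maximum of {j : alpha_j <= 10^{-M}}; then Jcal = 1 + m *)
Definition is_max_alpha_idx (T M : R) (m : nat) : Prop :=
  alpha T m <= Rpower 10 (- M) /\
  (forall j : nat, alpha T j <= Rpower 10 (- M) -> (j <= m)%nat).

Definition Pj (T : R) (j : nat) (s : C) : C :=
  prime_sum (Rpower T (alpha T (j - 1))) (Rpower T (alpha T j)) s.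

Definition Etrunc (l : R) (x : C) : C :=
  sum_n_m (fun i : nat => (Cpow x i / RtoC (INR (fact i)))%C) 0 (ceilN l).

Definition ell (k T : R) (j : nat) : R := exp 2 * k * Rpower (alpha T j) (- (3 / 4)).

Definition Kj (k T : R) (j : nat) : nat := ceilN (ell k T j).

Definition deltaj (k T : R) (j : nat) : R := exp (- ell k T j).

Definition Nj (k T : R) (j : nat) (s : C) (a : R) : C :=
  Etrunc (ell k T j) (RtoC a * Pj T j s)%C.

Definition Qj (k T : R) (j : nat) (s : C) : C :=
  Cpow (RtoC (64 * Rmax 2 (k + 3 / 2)) * Pj T j s / RtoC (INR (Kj k T j)))%C
       (Kj k T j).

Definition rk (k : R) : nat :=
  if Rle_dec k (1 / 2) then (2 + ceilN (1 / k))%nat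
  else (1 + ceilN (2 * k / (2 * k - 1)))%nat.

(* Main.v *)
Require Import Defs.
From Stdlib Require Import Reals Lra Lia Psatz Factorial ZArith.
From Coquelicot Require Import Coquelicot.
Open Scope R_scope.

Definition er (n:nat) (x:R) : R := x ^ n / INR (fact n).
Definition ER (K:nat) (x:R) : R := sum_n_m (fun n => er n x) 0 K.

Lemma fact_pos n : 0 < INR (fact n).
Proof. apply lt_0_INR, lt_O_fact. Qed.

Lemma er_nonneg n x : 0 <= x -> 0 <= er n x.
Proof. intro; unfold er. apply Rmult_le_pos; [apply pow_le; auto|].
  left; apply Rinv_0_lt_compat, fact_pos. Qed.

Lemma exp_series x : is_series (fun n => er n x) (exp x).
Proof.
  generalize (is_exp_Reals x); intro H. apply is_pseries_R in H.
  eapply is_series_ext; [|exact H]. intro n; unfold er; simpl. unfold Rdiv; ring.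
Qed.

Lemma fact_add n m : (fact n * fact m <= fact (n + m))%nat.
Proof.
  induction m. rewrite Nat.add_0_r; simpl; lia.
  rewrite Nat.add_succ_r. simpl fact. nia.
Qed.

Lemma tail_series y K : is_series (fun m => er (S K + m) y) (exp y - ER K y).
Proof.
  apply (is_series_incr_n (fun n => er n y) (S K)); [lia|]. simpl Nat.pred. unfold sum_n.
  replace (plus _ _) with (exp y).
  apply exp_series. unfold ER. unfold plus; simpl. unfold Rminus. rewrite Rplus_assoc, Rplus_opp_l; ring.
Qed.

Lemma er_split K m y : Rabs (er (S K + m) y) <= Rabs y ^ S K / INR (fact (S K)) * er m (Rabs y).
Proof.
  unfold er, Rdiv. rewrite Rabs_mult, <- RPow_abs, pow_add.
  rewrite Rabs_inv, (Rabs_pos_eq (INR (fact (S K + m)))) by (left; apply fact_pos).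
  assert (H := fact_add (S K) m). apply le_INR in H. rewrite mult_INR in H.
  assert (H1 := fact_pos (S K)). assert (H2 := fact_pos m).
  assert (H3 : 0 <= Rabs y ^ S K * Rabs y ^ m) by (apply Rmult_le_pos; apply pow_le, Rabs_pos).
  replace (Rabs y ^ S K * / INR (fact (S K)) * (Rabs y ^ m * / INR (fact m)))
    with (Rabs y ^ S K * Rabs y ^ m * / (INR (fact (S K)) * INR (fact m))) by (field; lra).
  apply Rmult_le_compat_l; auto. apply Rinv_le_contravar; nra.
Qed.

Lemma tail_bound y K : Rabs (exp y - ER K y) <= Rabs y ^ S K / INR (fact (S K)) * exp (Rabs y).
Proof.
  set (c := Rabs y ^ S K / INR (fact (S K))).
  assert (Hb : is_series (fun m => c * er m (Rabs y)) (c * exp (Rabs y))).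
  { generalize (is_series_scal c _ _ (exp_series (Rabs y))). intro H. exact H. }
  rewrite <- (is_series_unique _ _ (tail_series y K)).
  rewrite <- (is_series_unique _ _ Hb).
  eapply Rle_trans. apply Series_Rabs.
  { apply (@ex_series_le R_AbsRing R_CompleteNormedModule _ (fun m => c * er m (Rabs y))); [|exists (c * exp (Rabs y)); exact Hb].
    intro n. unfold norm; simpl. rewrite Rabs_Rabsolu. apply er_split. }
  apply Series_le; [|exists (c * exp (Rabs y)); exact Hb].
  intro n; split; [apply Rabs_pos| apply er_split].
Qed.

Lemma ER_le_exp x K : 0 <= x -> ER K x <= exp x.
Proof.
  intro Hx. assert (0 <= exp x - ER K x); [|lra].
  rewrite <- (is_series_unique _ _ (tail_series x K)).
  assert (Series (fun _ : nat => 0) = 0).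
  { unfold Series. rewrite (Lim_seq_ext _ (fun _ => 0)). rewrite Lim_seq_const. reflexivity.
    intro n. unfold sum_n. apply (@sum_n_m_const_zero R_AbelianMonoid). }
  rewrite <- H. apply Series_le; [|eexists; apply tail_series].
  intro; split; [lra|]. apply er_nonneg; auto.
Qed.

Lemma ER_nonneg x K : 0 <= x -> 0 <= ER K x.
Proof. intro. unfold ER. induction K. rewrite sum_n_n. apply er_nonneg; auto.
  rewrite sum_n_Sm by lia. change plus with Rplus; simpl.
  generalize (er_nonneg (S K) x H); lra. Qed.

Lemma er_le_exp x n : 0 <= x -> er n x <= exp x.
Proof.
  intro Hx. eapply Rle_trans; [|apply (ER_le_exp x n Hx)]. unfold ER.
  destruct n. rewrite sum_n_n; lra.
  rewrite sum_n_Sm by lia. change plus with Rplus; simpl.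
  generalize (ER_nonneg x n Hx); unfold ER; lra.
Qed.


Lemma exp_nat n c : exp (INR n * c) = exp c ^ n.
Proof. induction n. simpl. rewrite Rmult_0_l, exp_0; ring.
  rewrite S_INR, Rmult_plus_distr_r, exp_plus, IHn, Rmult_1_l. simpl; ring. Qed.

Lemma exp_1_15 : exp (1/15) <= 15/14.
Proof. assert (H := exp_ineq1_le (-(1/15))). assert (H1 := exp_pos (-(1/15))).
  replace (exp (1/15)) with (/ exp (-(1/15))). 
  replace (15/14) with (/ (14/15)) by field. apply Rinv_le_contravar; lra.
  rewrite <- exp_Ropp. f_equal; ring. Qed.

Definition Bd (r:R) (K:nat) := r ^ S K / INR (fact (S K)) * exp r.

Lemma Bd_mono r s K : 0 <= r <= s -> Bd r K <= Bd s K.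
Proof. intros [H1 H2]. unfold Bd. apply Rmult_le_compat.
  apply Rmult_le_pos. apply pow_le; lra. left; apply Rinv_0_lt_compat, fact_pos.
  left; apply exp_pos.
  apply Rmult_le_compat_r. left; apply Rinv_0_lt_compat, fact_pos. apply pow_incr; split; lra.
  destruct (Req_dec r s). subst; lra. left; apply exp_increasing; lra. Qed.

Lemma Bd_nonneg r K : 0 <= r -> 0 <= Bd r K.
Proof. intro. unfold Bd. apply Rmult_le_pos. apply Rmult_le_pos. apply pow_le; lra.
  left; apply Rinv_0_lt_compat, fact_pos. left; apply exp_pos. Qed.

Lemma numA r K : 0 <= r <= INR (S K) / 30 -> 2 * Bd r K * exp r * exp (INR K) <= 1.
Proof.
  intros [H0 H1]. set (n := S K) in *. set (N := INR n) in *.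
  assert (HN : 0 < N) by (apply lt_0_INR; unfold n; lia).
  assert (HF := fact_pos n).
  assert (A1 : r ^ n <= (N/30) ^ n) by (apply pow_incr; split; lra).
  assert (A2 : N ^ n / INR (fact n) <= exp N) by (apply er_le_exp; lra).
  assert (A3 : exp r * exp r <= exp (1/15) ^ n).
  { rewrite <- exp_plus, <- exp_nat. destruct (Req_dec (r+r) (N * (1/15))). rewrite H; right; reflexivity.
    left; apply exp_increasing. fold N. lra. }
  assert (A4 : exp (INR K) <= exp 1 ^ n).
  { rewrite <- exp_nat. fold N. unfold N, n. rewrite S_INR.
    destruct (Req_dec (INR K) ((INR K + 1) * 1)). rewrite <- H; right; reflexivity.
    left; apply exp_increasing. lra. }
  assert (A5 : exp N = exp 1 ^ n) by (rewrite <- exp_nat; f_equal; fold N; ring).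
  assert (E3 := exp_le_3). assert (E15 := exp_1_15). assert (Ep := exp_pos 1). assert (Ep2 := exp_pos (1/15)).
  set (q := exp 1 * exp 1 * exp (1/15) / 30).
  assert (Hq0 : 0 <= q) by (unfold q; apply Rmult_le_pos; [|lra]; apply Rmult_le_pos; [nra|lra]).
  assert (Hq : q <= 1/3).
  { unfold q. assert (exp 1 * exp 1 <= 9) by nra.
    assert (exp 1 * exp 1 * exp (1/15) <= 9 * (15/14)) by (apply Rmult_le_compat; nra).
    lra. }
  assert (Hqn : q ^ n <= q) by (unfold n; simpl; assert (q^K <= 1) by (rewrite <- (pow1 K); apply pow_incr; split; lra); nra).
  assert (Key : 2 * Bd r K * exp r * exp (INR K) <= 2 * q ^ n).
  { unfold Bd. fold n.
    replace (2 * (r ^ n / INR (fact n) * exp r) * exp r * exp (INR K))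
      with (2 * (r ^ n / INR (fact n)) * (exp r * exp r) * exp (INR K)) by ring.
    assert (B1 : r ^ n / INR (fact n) <= exp 1 ^ n / 30 ^ n).
    { unfold Rdiv in *. apply Rle_trans with ((N/30)^n * / INR (fact n)).
      apply Rmult_le_compat_r; [left; apply Rinv_0_lt_compat; lra| lra].
      unfold Rdiv. rewrite Rpow_mult_distr, pow_inv.
      replace (N ^ n * / 30 ^ n * / INR (fact n)) with (N ^ n * / INR (fact n) * / 30 ^ n) by ring.
      apply Rmult_le_compat_r. left; apply Rinv_0_lt_compat, pow_lt; lra. lra. }
    assert (B0 : 0 <= r ^ n / INR (fact n)).
    { apply Rmult_le_pos. apply pow_le; lra. left; apply Rinv_0_lt_compat; lra. }
    assert (B2 : 0 <= exp r * exp r) by (generalize (exp_pos r); nra).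
    apply Rle_trans with (2 * (exp 1 ^ n / 30 ^ n) * exp (1/15) ^ n * exp 1 ^ n).
    apply Rmult_le_compat. nra. left; apply exp_pos.
    apply Rmult_le_compat; nra. auto.
    right. unfold q, Rdiv. rewrite !Rpow_mult_distr, pow_inv. ring. }
  lra.
Qed.

Lemma ceilN_ge x : 0 <= x -> x <= INR (ceilN x).
Proof.
  intro Hx. unfold ceilN, ceilZ. destruct (base_Int_part (- x)) as [H1 H2].
  assert (0 <= - Int_part (- x))%Z.
  { apply le_IZR. rewrite opp_IZR. lra. }
  rewrite INR_IZR_INZ, Z2Nat.id by auto. rewrite opp_IZR. lra.
Qed.

Lemma ln_ge u : 0 < u -> 1 - / u <= ln u.
Proof. intro Hu. assert (H := exp_ineq1_le (- ln u)). rewrite exp_Ropp, exp_ln in H by auto. lra. Qed.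

Lemma pow38 K : INR (S K) * 3 ^ K <= 8 ^ K.
Proof. induction K. simpl; lra. rewrite S_INR in *. rewrite S_INR. change (3 ^ S K) with (3 * 3 ^ K). change (8 ^ S K) with (8 * 8 ^ K).
  assert (0 <= 3 ^ K) by (apply pow_le; lra). assert (0 <= INR K) by apply pos_INR. nra. Qed.


Definition e (n:nat) (w:C) : C := (Cpow w n / RtoC (INR (fact n)))%C.
Definition E (K:nat) (w:C) : C := sum_n_m (fun i => e i w) 0 K.

Ltac Cring := match goal with |- ?a = ?b => change (@eq C a b) end; ring.

Lemma RtoC_eq a b : RtoC a = RtoC b -> a = b.
Proof. intro H. apply (f_equal fst) in H. exact H. Qed.

Lemma INR_neq n : (0 < n)%nat -> RtoC (INR n) <> 0%C.
Proof. intros Hn H. apply RtoC_eq in H. apply lt_0_INR in Hn. lra. Qed.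

Lemma fact_neq n : RtoC (INR (fact n)) <> 0%C.
Proof. apply INR_neq, lt_O_fact. Qed.

Lemma Cmod_e n w : Cmod (e n w) = er n (Cmod w).
Proof. unfold e, er. rewrite Cmod_div by apply fact_neq. rewrite Cmod_pow, Cmod_R, Rabs_pos_eq.
  reflexivity. left; apply fact_pos. Qed.

Lemma sum_map {G H : AbelianMonoid} (f : G -> H) (Hz : f zero = zero)
  (Hp : forall x y, f (plus x y) = plus (f x) (f y)) a n m :
  f (sum_n_m a n m) = sum_n_m (fun i => f (a i)) n m.
Proof.
  revert n. induction m; intros n.
  - destruct n. rewrite !sum_n_n; auto. rewrite !sum_n_m_zero by lia; auto.
  - destruct (le_lt_dec n (S m)).
    + destruct (Nat.eq_dec n (S m)). subst; rewrite !sum_n_n; auto.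
      rewrite !sum_n_Sm by lia. rewrite Hp, IHm. auto.
    + rewrite !sum_n_m_zero by lia; auto.
Qed.

Lemma conj_R r : Cconj (RtoC r) = RtoC r.
Proof. apply injective_projections; simpl; ring. Qed.

Lemma e_conj n w : Cconj (e n w) = e n (Cconj w).
Proof. unfold e. rewrite Cdiv_conj by apply fact_neq. rewrite Cpow_conj, conj_R. reflexivity. Qed.

Lemma E_conj K w : Cconj (E K w) = E K (Cconj w).
Proof. unfold E. rewrite (@sum_map C_AbelianMonoid C_AbelianMonoid Cconj).
  apply sum_n_m_ext. intro; apply e_conj.
  apply injective_projections; simpl; ring.
  intros; apply Cplus_conj. Qed.

Lemma e_RtoC n a : e n (RtoC a) = RtoC (er n a).
Proof. unfold e, er. rewrite RtoC_div. rewrite RtoC_pow. reflexivity.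
  generalize (fact_pos n); lra. Qed.

Lemma sum_RtoC (f : nat -> R) n m : RtoC (sum_n_m f n m) = sum_n_m (fun i => RtoC (f i)) n m.
Proof. apply (@sum_map R_AbelianMonoid C_AbelianMonoid RtoC). reflexivity.
  intros x y; exact (RtoC_plus x y). Qed.

Lemma E_RtoC K a : E K (RtoC a) = RtoC (ER K a).
Proof. unfold E, ER. rewrite sum_RtoC. apply sum_n_m_ext; intro; apply e_RtoC. Qed.

Lemma e_S n w : (RtoC (INR (S n)) * e (S n) w = w * e n w)%C.
Proof. unfold e. rewrite Cpow_S. change (fact (S n)) with (S n * fact n)%nat.
  rewrite mult_INR, RtoC_mult. field. split. apply fact_neq. apply INR_neq; lia. Qed.

Lemma Csum_mult_l (c : C) a n m : (c * sum_n_m a n m)%C = sum_n_m (fun i => c * a i)%C n m.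
Proof. symmetry; exact (@sum_n_m_mult_l C_Ring c a n m). Qed.
Lemma Csum_mult_r (c : C) a n m : (sum_n_m a n m * c)%C = sum_n_m (fun i => a i * c)%C n m.
Proof. symmetry; exact (@sum_n_m_mult_r C_Ring c a n m). Qed.
Lemma Csum_plus (a b : nat -> C) n m : sum_n_m (fun i => a i + b i)%C n m = (sum_n_m a n m + sum_n_m b n m)%C.
Proof. exact (@sum_n_m_plus C_AbelianMonoid a b n m). Qed.
Lemma Csum_Sn_m (a : nat -> C) n m : (n <= m)%nat -> sum_n_m a n m = (a n + sum_n_m a (S n) m)%C.
Proof. intro; exact (@sum_Sn_m C_AbelianMonoid a n m H). Qed.
Lemma Csum_n_Sm (a : nat -> C) n m : (n <= S m)%nat -> sum_n_m a n (S m) = (sum_n_m a n m + a (S m))%C.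
Proof. intro; exact (@sum_n_Sm C_AbelianMonoid a n m H). Qed.


Lemma Csum_norm (a : nat -> C) n m : Cmod (sum_n_m a n m) <= sum_n_m (fun i => Cmod (a i)) n m.
Proof.
  revert n. induction m; intros n.
  - destruct n. rewrite !sum_n_n; lra. rewrite !sum_n_m_zero by lia.
    change (Cmod (RtoC 0) <= 0). rewrite Cmod_0; lra.
  - destruct (le_lt_dec n (S m)).
    + destruct (Nat.eq_dec n (S m)). subst; rewrite !sum_n_n; lra.
      rewrite Csum_n_Sm by lia. rewrite sum_n_Sm by lia.
      eapply Rle_trans. apply Cmod_triangle. change plus with Rplus. simpl.
      generalize (IHm n). lra.
    + rewrite !sum_n_m_zero by lia. change (Cmod (RtoC 0) <= 0). rewrite Cmod_0; lra.
Qed.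

Lemma E_norm K w : Cmod (E K w) <= ER K (Cmod w).
Proof. unfold E, ER. eapply Rle_trans. apply Csum_norm.
  right. apply sum_n_m_ext. intro; apply Cmod_e. Qed.

Lemma conv w v n : sum_n_m (fun i => e i w * e (n - i) v)%C 0 n = e n (w + v).
Proof.
  induction n.
  - rewrite sum_n_n. unfold e; simpl. field.
  - set (c := RtoC (INR (S n))).
    assert (Hc : c <> 0%C) by (apply INR_neq; lia).
    assert (H : (c * sum_n_m (fun i => e i w * e (S n - i) v)%C 0 (S n))%C = (c * e (S n) (w + v))%C).
    { unfold c at 2. rewrite e_S, <- IHn.
      rewrite Csum_mult_l.
      rewrite (sum_n_m_ext_loc _ (fun i => (RtoC (INR i) * e i w) * e (S n - i) v
                  + e i w * (RtoC (INR (S n - i)) * e (S n - i) v))%C).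
      2:{ intros i Hi. unfold c. replace (INR (S n)) with (INR i + INR (S n - i)).
          rewrite RtoC_plus. Cring. rewrite <- plus_INR. f_equal. lia. }
      rewrite Csum_plus.
      rewrite (Csum_Sn_m _ 0) by lia. rewrite <- sum_n_m_S.
      rewrite (Csum_n_Sm _ 0 n) by lia.
      rewrite (sum_n_m_ext _ (fun i => w * (e i w * e (n - i) v))%C).
      2:{ intro i. rewrite e_S. simpl (S n - S i)%nat. Cring. }
      rewrite (sum_n_m_ext_loc (fun i => e i w * (RtoC (INR (S n - i)) * e (S n - i) v))%C
                 (fun i => v * (e i w * e (n - i) v))%C).
      2:{ intros i Hi. replace (S n - i)%nat with (S (n - i)) by lia. rewrite e_S. Cring. }
      rewrite <- !Csum_mult_l. rewrite Nat.sub_diag. simpl INR. rewrite !Cmult_0_l. Cring. }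
    apply (f_equal (Cmult (/ c))) in H. rewrite !Cmult_assoc, Cinv_l, !Cmult_1_l in H by auto.
    exact H.
Qed.


Lemma tri {G : AbelianMonoid} (g : nat -> nat -> G) K :
  sum_n_m (fun n => sum_n_m (fun i => g i (n - i)%nat) 0 n) 0 K
  = sum_n_m (fun i => sum_n_m (fun j => g i j) 0 (K - i)) 0 K.
Proof.
  induction K.
  - rewrite !sum_n_n. reflexivity.
  - rewrite sum_n_Sm by lia. rewrite IHK.
    rewrite (sum_n_Sm (fun i => sum_n_m (fun j => g i j) 0 (S K - i))) by lia.
    rewrite Nat.sub_diag, sum_n_n.
    rewrite (sum_n_m_ext_loc (fun i => sum_n_m (fun j => g i j) 0 (S K - i))
              (fun i => plus (sum_n_m (fun j => g i j) 0 (K - i)) (g i (S K - i)%nat))).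
    2:{ intros i Hi. replace (S K - i)%nat with (S (K - i)) by lia. rewrite sum_n_Sm by lia. reflexivity. }
    rewrite sum_n_m_plus. rewrite (sum_n_Sm (fun i => g i (S K - i)%nat)) by lia.
    rewrite Nat.sub_diag. rewrite plus_assoc. reflexivity.
Qed.

Definition D K w v := sum_n_m (fun i => sum_n_m (fun j => (e i w * e j v)%C) (S (K - i)) K) 0 K.

Lemma prod_id K w v : (E K w * E K v - E K (w + v))%C = D K w v.
Proof.
  assert (H1 : E K (w + v) = sum_n_m (fun i => sum_n_m (fun j => (e i w * e j v)%C) 0 (K - i)) 0 K).
  { unfold E. rewrite <- (tri (G := C_AbelianMonoid) (fun i j => (e i w * e j v)%C)).
    apply sum_n_m_ext; intro n. symmetry; apply conv. }
  assert (H2 : (E K w * E K v)%C = (sum_n_m (fun i => sum_n_m (fun j => (e i w * e j v)%C) 0 (K - i)) 0 K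
                 + D K w v)%C).
  { unfold D. rewrite <- Csum_plus. unfold E at 1. rewrite Csum_mult_r.
    apply sum_n_m_ext_loc. intros i Hi. unfold E. rewrite Csum_mult_l.
    exact (@sum_n_m_Chasles C_AbelianMonoid _ 0 (K - i) K ltac:(lia) ltac:(lia)). }
  rewrite H1, H2. Cring.
Qed.

Definition DR K a b := sum_n_m (fun i => sum_n_m (fun j => er i a * er j b) (S (K - i)) K) 0 K.

Lemma D_norm K w v : Cmod (D K w v) <= DR K (Cmod w) (Cmod v).
Proof.
  unfold D, DR. eapply Rle_trans. apply Csum_norm. apply sum_n_m_le. intro i.
  eapply Rle_trans. apply Csum_norm. right. apply sum_n_m_ext. intro j.
  rewrite Cmod_mult, !Cmod_e. reflexivity.
Qed.

Lemma DR_id K a b : DR K a b = ER K a * ER K b - ER K (a + b).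
Proof.
  apply RtoC_eq. rewrite RtoC_minus, RtoC_mult, <- !E_RtoC, RtoC_plus, prod_id.
  unfold DR, D. rewrite sum_RtoC. apply sum_n_m_ext; intro i. rewrite sum_RtoC.
  apply sum_n_m_ext; intro j. rewrite RtoC_mult, !e_RtoC. reflexivity.
Qed.

Lemma prod_bound K w v : Cmod (E K w * E K v - E K (w + v))%C <= Bd (Cmod w + Cmod v) K.
Proof.
  rewrite prod_id. eapply Rle_trans. apply D_norm. rewrite DR_id.
  set (a := Cmod w). set (b := Cmod v).
  assert (Ha : 0 <= a) by apply Cmod_ge_0. assert (Hb : 0 <= b) by apply Cmod_ge_0.
  assert (ER K a * ER K b <= exp a * exp b).
  { apply Rmult_le_compat; try apply ER_nonneg; try apply ER_le_exp; auto. }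
  rewrite <- exp_plus in H.
  assert (T := tail_bound (a + b) K). rewrite (Rabs_pos_eq (a + b)) in T by lra.
  unfold Bd. apply Rabs_le_between in T. lra.
Qed.


Lemma exp_le x y : x <= y -> exp x <= exp y.
Proof. intro H. destruct (Req_dec x y). subst; lra. left; apply exp_increasing; lra. Qed.

Lemma E_sq K w : Rabs (Cmod (E K w) ^ 2 - exp (2 * Re w)) <= 2 * Bd (2 * Cmod w) K.
Proof.
  assert (H1 : Rabs (Cmod (E K w) ^ 2 - ER K (2 * Re w)) <= Bd (2 * Cmod w) K).
  { rewrite <- Cmod_R. rewrite RtoC_minus, Cmod2_conj, E_conj, <- E_RtoC.
    replace (RtoC (2 * Re w)) with (w + Cconj w)%C.
    eapply Rle_trans. apply prod_bound. rewrite Cmod_conj. right; f_equal; ring.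
    destruct w as [x y]. apply injective_projections; simpl; ring. }
  assert (H2 : Rabs (ER K (2 * Re w) - exp (2 * Re w)) <= Bd (2 * Cmod w) K).
  { rewrite Rabs_minus_sym. eapply Rle_trans. apply tail_bound. apply Bd_mono.
    split. apply Rabs_pos. rewrite Rabs_mult, Rabs_pos_eq by lra.
    generalize (re_le_Cmod w); lra. }
  replace (Cmod (E K w) ^ 2 - exp (2 * Re w)) with
    ((Cmod (E K w) ^ 2 - ER K (2 * Re w)) + (ER K (2 * Re w) - exp (2 * Re w))) by ring.
  eapply Rle_trans. apply Rabs_triang. lra.
Qed.

Lemma caseA K w : Cmod w <= INR (S K) / 60 ->
  Rabs (Cmod (E K w) ^ 2 - exp (2 * Re w)) <= exp (- INR K) * exp (2 * Re w).
Proof.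
  intro Hw. eapply Rle_trans. apply E_sq.
  set (r := 2 * Cmod w).
  assert (Hr : 0 <= r <= INR (S K) / 30) by (unfold r; generalize (Cmod_ge_0 w); split; lra).
  assert (N := numA r K Hr).
  assert (Hre : - r <= 2 * Re w) by (unfold r; generalize (re_le_Cmod w); intro; apply Rabs_le_between in H; lra).
  apply exp_le in Hre. rewrite exp_Ropp in Hre.
  assert (P1 := exp_pos r). assert (P2 := exp_pos (INR K)).
  rewrite exp_Ropp.
  assert (2 * Bd r K <= / exp (INR K) * / exp r).
  { rewrite <- Rinv_mult. apply Rmult_le_reg_r with (exp (INR K) * exp r). nra.
    rewrite Rinv_l by nra.
    replace (2 * Bd r K * (exp (INR K) * exp r)) with (2 * Bd r K * exp r * exp (INR K)) by ring.
    lra. }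
  eapply Rle_trans. apply H. apply Rmult_le_compat_l. left; apply Rinv_0_lt_compat; auto. auto.
Qed.

Lemma ER_mono K x y : 0 <= x <= y -> ER K x <= ER K y.
Proof. intro H. unfold ER. apply sum_n_m_le. intro n. unfold er.
  apply Rmult_le_compat_r. left; apply Rinv_0_lt_compat, fact_pos. apply pow_incr; auto. Qed.

Lemma sum_le_const (a : nat -> R) c K : (forall i, (i <= K)%nat -> a i <= c) -> sum_n_m a 0 K <= INR (S K) * c.
Proof. induction K; intro H. rewrite sum_n_n. simpl. generalize (H 0%nat (le_n _)); lra.
  rewrite sum_n_Sm by lia. change plus with Rplus. 
  assert (sum_n_m a 0 K <= INR (S K) * c) by (apply IHK; intros; apply H; lia).
  generalize (H (S K) (le_n _)). rewrite (S_INR (S K)). intros; lra. Qed.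

Lemma caseB K w u : 21/20 <= u -> Cmod w <= u * INR K / 64 -> Cmod (E K w) <= u ^ K.
Proof.
  intros Hu Hw. eapply Rle_trans. apply E_norm.
  set (X := u * INR K / 64).
  assert (HK := pos_INR K).
  eapply Rle_trans. apply (ER_mono K _ X). split; [apply Cmod_ge_0|auto].
  destruct (Rle_dec u 8).
  - eapply Rle_trans. apply ER_le_exp. unfold X. apply Rmult_le_pos; [|lra]. nra.
    replace (u ^ K) with (exp (INR K * ln u)).
    apply exp_le. assert (L := ln_ge u ltac:(lra)).
    assert (u / 64 <= 1 - / u).
    { assert (0 < u) by lra. apply Rmult_le_reg_r with u; auto.
      rewrite Rmult_minus_distr_r, Rinv_l by lra. nra. }
    unfold X. nra.
    rewrite exp_nat, exp_ln by lra. reflexivity.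
  - set (Mx := Rmax 1 (u / 64)).
    assert (HM1 : 1 <= Mx) by apply Rmax_l. assert (HM2 : u / 64 <= Mx) by apply Rmax_r.
    unfold ER. eapply Rle_trans. apply (sum_le_const _ (Mx ^ K * exp (INR K))).
    { intros i Hi. unfold er, X.
      replace (u * INR K / 64) with (u / 64 * INR K) by field.
      rewrite Rpow_mult_distr. unfold Rdiv at 1. rewrite Rmult_assoc.
      apply Rmult_le_compat. apply pow_le; lra.
      apply Rmult_le_pos. apply pow_le; auto. left; apply Rinv_0_lt_compat, fact_pos.
      apply Rle_trans with (Mx ^ i). apply pow_incr; lra. apply Rle_pow; auto.
      apply (er_le_exp (INR K) i HK). }
    assert (E3 : exp (INR K) <= 3 ^ K).
    { rewrite <- (Rmult_1_r (INR K)), exp_nat. apply pow_incr. split. left; apply exp_pos. apply exp_le_3. }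
    assert (P8 := pow38 K).
    assert (0 <= Mx ^ K) by (apply pow_le; lra).
    apply Rle_trans with (8 ^ K * Mx ^ K).
    { assert (INR (S K) * exp (INR K) <= 8 ^ K).
      { eapply Rle_trans; [|apply P8]. apply Rmult_le_compat_l. apply pos_INR. auto. }
      nra. }
    rewrite <- Rpow_mult_distr. apply pow_incr. split. lra.
    unfold Mx, Rmax. destruct Rle_dec; lra.
Qed.


Lemma pow_exp_ln U n : 0 < U -> U ^ n = exp (INR n * ln U).
Proof. intro. rewrite exp_nat, exp_ln; auto. Qed.

Lemma rpow_le x y X : 0 <= y -> 0 <= x <= X -> 0 < X -> rpow x y <= exp (y * ln X).
Proof. intros Hy Hx HX. unfold rpow. destruct (Req_EM_T x 0). left; apply exp_pos.
  unfold Rpower. apply exp_le. apply Rmult_le_compat_l; auto. apply ln_le; lra. Qed.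

Lemma Rpower_pos x y : 0 < Rpower x y.
Proof. unfold Rpower; apply exp_pos. Qed.

Lemma rk_i k : 0 < k -> k <= 1/2 -> 4 + 2 / k <= INR (2 * rk k).
Proof. intros Hk H. unfold rk. destruct (Rle_dec k (1/2)); [|lra].
  rewrite mult_INR, plus_INR. assert (1 / k <= INR (ceilN (1/k))).
  apply ceilN_ge. left; apply Rdiv_lt_0_compat; lra. simpl. unfold Rdiv in *. lra. Qed.

Lemma rk_ii k : 1/2 < k -> 2 + 2 * (2 * k / (2 * k - 1)) <= INR (2 * rk k).
Proof. intros H. unfold rk. destruct (Rle_dec k (1/2)); [lra|].
  rewrite mult_INR, plus_INR. assert (2 * k / (2 * k - 1) <= INR (ceilN (2 * k / (2 * k - 1)))).
  apply ceilN_ge. left; apply Rdiv_lt_0_compat; lra. simpl. lra. Qed.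


Lemma main_abs (k l : R) (z : C) : 0 < k -> 0 < l ->
  (k <= 1 / 2 ->
     rpow (Cmod (E (ceilN l) (RtoC k * z))) (2 / k) * (Cmod (E (ceilN l) (RtoC (k - 1) * z))) ^ 2
     <= (Cmod (E (ceilN l) (RtoC k * z))) ^ 2 * Rpower (1 + exp (- l)) (2 / k + 2) / (1 - exp (- l)) ^ 2
        + (Cmod (Cpow (RtoC (64 * Rmax 2 (k + 3 / 2)) * z / RtoC (INR (ceilN l)))%C (ceilN l))) ^ (2 * rk k)) /\
  (1 / 2 < k ->
     rpow (Cmod (E (ceilN l) (RtoC (k - 1) * z) * E (ceilN l) (RtoC k * z))%C) (2 * k / (2 * k - 1))
     <= (Cmod (E (ceilN l) (RtoC k * z))) ^ 2 * Rpower (1 + exp (- l)) (2 * k / (2 * k - 1)) / (1 - exp (- l)) ^ 2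
        + (Cmod (Cpow (RtoC (64 * Rmax 2 (k + 3 / 2)) * z / RtoC (INR (ceilN l)))%C (ceilN l))) ^ (2 * rk k)).
Proof.
  intros Hk Hl.
  set (K := ceilN l). set (d := exp (- l)).
  assert (HKl : l <= INR K) by (apply ceilN_ge; lra).
  assert (HK0 : 0 < INR K) by lra.
  assert (HKn : (0 < K)%nat) by (apply INR_lt; simpl; lra).
  assert (Hd0 : 0 < d) by apply exp_pos.
  assert (Hd1 : d < 1) by (unfold d; rewrite <- exp_0; apply exp_increasing; lra).
  assert (HdK : exp (- INR K) <= d) by (apply exp_le; lra).
  set (c := 64 * Rmax 2 (k + 3 / 2)).
  assert (Hc1 : 64 * (k + 3 / 2) <= c) by (unfold c; generalize (Rmax_r 2 (k + 3/2)); lra).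
  assert (Hc2 : 128 <= c) by (unfold c; generalize (Rmax_l 2 (k + 3/2)); lra).
  assert (Hz := Cmod_ge_0 z).
  set (u := c * Cmod z / INR K).
  assert (Hu0 : 0 <= u) by (unfold u; apply Rmult_le_pos; [nra| left; apply Rinv_0_lt_compat; lra]).
  assert (HQ : Cmod (Cpow (RtoC c * z / RtoC (INR K))%C K) = u ^ K).
  { rewrite Cmod_pow. f_equal. rewrite Cmod_div by (apply INR_neq; auto).
    rewrite Cmod_mult, !Cmod_R, !Rabs_pos_eq by lra. reflexivity. }
  rewrite HQ.
  assert (Hw : forall a, Rabs a <= c / 64 -> Cmod (RtoC a * z) <= u * INR K / 64).
  { intros a Ha. rewrite Cmod_mult, Cmod_R. unfold u.
    replace (c * Cmod z / INR K * INR K / 64) with (c / 64 * Cmod z) by (field; lra).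
    apply Rmult_le_compat_r; auto. }
  assert (Hak : Rabs k <= c / 64) by (rewrite Rabs_pos_eq; lra).
  assert (Hak1 : Rabs (k - 1) <= c / 64) by (apply Rabs_le; split; lra).
  assert (HQ0 : 0 <= (u ^ K) ^ (2 * rk k)) by (apply pow_le, pow_le; auto).
  set (Nk := Cmod (E K (RtoC k * z))). set (Nk1 := Cmod (E K (RtoC (k - 1) * z))).
  assert (HNk : 0 <= Nk) by apply Cmod_ge_0. assert (HNk1 : 0 <= Nk1) by apply Cmod_ge_0.
  destruct (Rle_dec u (21/20)) as [HA|HB].
  -
    set (x := Re z).
    assert (CA : forall a, Rabs a <= c / 64 ->
      Rabs (Cmod (E K (RtoC a * z)) ^ 2 - exp (2 * (a * x))) <= d * exp (2 * (a * x))).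
    { intros a Ha. unfold x. rewrite <- re_scal_l. eapply Rle_trans. apply caseA.
      apply Rle_trans with (u * INR K / 64). apply Hw; auto. rewrite S_INR. nra.
      apply Rmult_le_compat_r. left; apply exp_pos. auto. }
    assert (CAk := CA k Hak). assert (CAk1 := CA (k - 1) Hak1). fold Nk in CAk. fold Nk1 in CAk1.
    apply Rabs_le_between in CAk. apply Rabs_le_between in CAk1.
    set (L := ln (1 + d)).
    assert (HL : 0 <= L) by (unfold L; rewrite <- ln_1; apply ln_le; lra).
    assert (HeL : exp L = 1 + d) by (unfold L; apply exp_ln; lra).
    set (Ek := exp (2 * (k * x))) in *. set (Ek1 := exp (2 * ((k - 1) * x))) in *.
    assert (HEk : 0 < Ek) by apply exp_pos. assert (HEk1 : 0 < Ek1) by apply exp_pos.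
    assert (HA0 : 0 < Nk ^ 2) by nra.
    assert (HNkp : 0 < Nk) by (destruct (Req_dec Nk 0); [rewrite H in HA0; simpl in HA0; lra| lra]).
    assert (lnA : ln (Nk ^ 2) <= L + 2 * (k * x)).
    { rewrite <- (ln_exp (L + 2 * (k * x))). apply ln_le; auto. rewrite exp_plus, HeL. fold Ek. nra. }
    rewrite ln_pow in lnA by auto. simpl INR in lnA.
    assert (RHS0 : Ek <= Nk ^ 2 / (1 - d) ^ 2).
    { apply Rmult_le_reg_r with ((1 - d) ^ 2). nra. unfold Rdiv. rewrite Rmult_assoc, Rinv_l by nra. nra. }
    split.
    + intro Hk2.
      assert (LHS1 : rpow Nk (2 / k) <= exp (L / k + 2 * x)).
      { unfold rpow. destruct (Req_EM_T Nk 0). lra. unfold Rpower. apply exp_le.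
        apply Rmult_le_reg_l with k; auto. field_simplify; try lra. }
      assert (HB1 : Nk1 ^ 2 <= exp (L + 2 * ((k - 1) * x))) by (rewrite exp_plus, HeL; fold Ek1; nra).
      assert (Hr0 : 0 <= rpow Nk (2 / k)).
      { unfold rpow. destruct (Req_EM_T Nk 0). lra. left; apply Rpower_pos. }
      assert (LHS : rpow Nk (2 / k) * Nk1 ^ 2 <= exp ((1 / k + 1) * L) * Ek).
      { eapply Rle_trans. apply Rmult_le_compat; eauto. apply pow2_ge_0.
        rewrite <- exp_plus. unfold Ek. rewrite <- exp_plus. apply exp_le. right. field. lra. }
      assert (Rp : exp ((1 / k + 1) * L) <= Rpower (1 + d) (2 / k + 2)).
      { unfold Rpower. fold L. apply exp_le. apply Rmult_le_compat_r; auto.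
        assert (0 < 1/k) by (apply Rdiv_lt_0_compat; lra). unfold Rdiv in *; lra. }
      assert (HRp := Rpower_pos (1 + d) (2 / k + 2)).
      assert (Nk ^ 2 * Rpower (1 + d) (2 / k + 2) / (1 - d) ^ 2 >= Ek * Rpower (1 + d) (2 / k + 2)).
      { replace (Nk ^ 2 * Rpower (1 + d) (2 / k + 2) / (1 - d) ^ 2) with
          (Nk ^ 2 / (1 - d) ^ 2 * Rpower (1 + d) (2 / k + 2)) by (field; lra). nra. }
      assert (0 <= exp ((1 / k + 1) * L)) by (left; apply exp_pos).
      nra.
    + intro Hk2. set (p := 2 * k / (2 * k - 1)).
      assert (Hp : 0 < p) by (unfold p; apply Rdiv_lt_0_compat; lra).
      assert (Hp2 : p * (2 * k - 1) = 2 * k) by (unfold p; field; lra).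
      rewrite Cmod_mult. fold Nk Nk1.
      assert (Hr : rpow (Nk1 * Nk) p <= exp (p * L) * Ek).
      { unfold rpow. destruct (Req_EM_T (Nk1 * Nk) 0). left; apply Rmult_lt_0_compat; [apply exp_pos|auto].
        assert (HNk1p : 0 < Nk1) by (destruct (Req_dec Nk1 0); [rewrite H in n; lra|lra]).
        assert (lnB : ln (Nk1 ^ 2) <= L + 2 * ((k - 1) * x)).
        { rewrite <- (ln_exp (L + 2 * ((k - 1) * x))). apply ln_le. nra. rewrite exp_plus, HeL. fold Ek1. nra. }
        rewrite ln_pow in lnB by auto. simpl INR in lnB.
        unfold Rpower. unfold Ek. rewrite <- exp_plus. apply exp_le.
        rewrite ln_mult by auto.
        assert (p * (ln Nk1 + ln Nk) <= p * (L + (2 * k - 1) * x)).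
        { apply Rmult_le_compat_l. lra. nra. }
        assert (p * ((2 * k - 1) * x) = 2 * k * x) by (rewrite <- Rmult_assoc, Hp2; ring). nra. }
      assert (HRp := Rpower_pos (1 + d) p).
      assert (Rp : exp (p * L) = Rpower (1 + d) p) by reflexivity.
      assert (Nk ^ 2 * Rpower (1 + d) p / (1 - d) ^ 2 >= Ek * Rpower (1 + d) p).
      { replace (Nk ^ 2 * Rpower (1 + d) p / (1 - d) ^ 2) with
          (Nk ^ 2 / (1 - d) ^ 2 * Rpower (1 + d) p) by (field; lra). nra. }
      rewrite Rp in Hr. nra.
  -
    assert (HB' : 21/20 <= u) by lra.
    assert (CBk : Nk <= u ^ K) by (apply caseB; auto).
    assert (CBk1 : Nk1 <= u ^ K) by (apply caseB; auto).
    set (U := u ^ K) in *.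
    assert (HU : 1 <= U) by (apply pow_R1_Rle; lra).
    assert (HlnU : 0 <= ln U) by (rewrite <- ln_1; apply ln_le; lra).
    assert (HRHS : forall R, 0 <= R -> U ^ (2 * rk k) <= Nk ^ 2 * R / (1 - d) ^ 2 + U ^ (2 * rk k)).
    { intros R HR. assert (0 <= Nk ^ 2 * R / (1 - d) ^ 2); [|lra].
      apply Rmult_le_pos. apply Rmult_le_pos; auto. apply pow2_ge_0. left; apply Rinv_0_lt_compat. nra. }
    split.
    + intro Hk2. eapply Rle_trans; [|apply HRHS; left; apply Rpower_pos].
      rewrite (pow_exp_ln U) by lra.
      assert (H1 : rpow Nk (2 / k) <= exp (2 / k * ln U)).
      { apply rpow_le; try lra. left; apply Rdiv_lt_0_compat; lra. }
      assert (H2 : Nk1 ^ 2 <= exp (2 * ln U)).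
      { replace (exp (2 * ln U)) with (U ^ 2). apply pow_incr. lra.
        rewrite (pow_exp_ln U) by lra. reflexivity. }
      assert (Hr0 : 0 <= rpow Nk (2 / k)).
      { unfold rpow. destruct (Req_EM_T Nk 0). lra. left; apply Rpower_pos. }
      eapply Rle_trans. apply Rmult_le_compat; eauto. apply pow2_ge_0.
      rewrite <- exp_plus. apply exp_le.
      assert (R := rk_i k Hk Hk2).
      assert (2 / k * ln U + 2 * ln U = (2 / k + 2) * ln U) by ring.
      nra.
    + intro Hk2. eapply Rle_trans; [|apply HRHS; left; apply Rpower_pos].
      rewrite (pow_exp_ln U) by lra.
      rewrite Cmod_mult. fold Nk Nk1.
      set (p := 2 * k / (2 * k - 1)).
      assert (Hp : 0 < p) by (unfold p; apply Rdiv_lt_0_compat; lra).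
      assert (H1 : rpow (Nk1 * Nk) p <= exp (p * ln (U * U))).
      { apply rpow_le; try lra. split. nra. apply Rmult_le_compat; lra. nra. }
      rewrite ln_mult in H1 by lra.
      eapply Rle_trans. apply H1. apply exp_le.
      assert (R := rk_ii k Hk2). fold p in R. nra.
Qed.


Theorem lemma3p2 :
  forall k : R, 0 < k ->
  exists M0 : R, forall M : R, M0 <= M ->
  exists T0 : R, forall T : R, T0 <= T ->
  forall m : nat, is_max_alpha_idx T M m ->
  forall j : nat, (1 <= j)%nat -> (j <= 1 + m)%nat ->
  forall s : C,
    (k <= 1 / 2 ->
      rpow (Cmod (Nj k T j s k)) (2 / k) * (Cmod (Nj k T j s (k - 1))) ^ 2
      <= (Cmod (Nj k T j s k)) ^ 2 * Rpower (1 + deltaj k T j) (2 / k + 2)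
           / (1 - deltaj k T j) ^ 2
         + (Cmod (Qj k T j s)) ^ (2 * rk k)) /\
    (1 / 2 < k ->
      rpow (Cmod (Nj k T j s (k - 1) * Nj k T j s k)%C) (2 * k / (2 * k - 1))
      <= (Cmod (Nj k T j s k)) ^ 2
           * Rpower (1 + deltaj k T j) (2 * k / (2 * k - 1))
           / (1 - deltaj k T j) ^ 2
         + (Cmod (Qj k T j s)) ^ (2 * rk k)).
Proof.
  intros k Hk. exists 0. intros M _. exists 0. intros T _ m _ j _ _ s.
  assert (Hl : 0 < ell k T j).
  { unfold ell. apply Rmult_lt_0_compat. apply Rmult_lt_0_compat. apply exp_pos. auto. apply Rpower_pos. }
  exact (main_abs k (ell k T j) (Pj T j s) Hk Hl).
Qed.
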